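(* For every integer $n\ge 2$, $d_{n+1}+1 < (d_n+1)^2$.
   Context: A delta-matroid $(E,\mathcal F)$ consists of a finite ground set $E$ and a non-empty collection $\mathcal F$ of subsets of $E$ (the feasible sets) satisfying the symmetric exchange axiom: for all $X,Y\in\mathcal F$ and every $e\in X\triangle Y$ there exists $f\in X\triangle Y$ (possibly $f=e$) with $X\triangle\{e,f\}\in\mathcal F$. Let $d_n$ denote the number of labelled delta-matroids with ground set $[n]=\{1,\dots,n\}$, i.e. the number of collections $\mathcal F$ of subsets of $[n]$ such that $([n],\mathcal F)$ is a delta-matroid. *)

(* Defs.v *)
From mathcomp Require Import all_boot.
Set Implicit Arguments. Unset Strict Implicit. Unset Printing Implicit Defensive.

Definition symdiff (T : finType) (A B : {set T}) : {set T} :=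
  (A :\: B) :|: (B :\: A).

(* A delta-matroid on ground set T: F nonempty and the symmetric exchange
   axiom: for X, Y in F and e in X Δ Y there is f in X Δ Y (possibly f = e)
   with X Δ {e,f} in F. *)
Definition is_delta_matroid (T : finType) (F : {set {set T}}) : bool :=
  (F != set0) &&
  [forall X in F, forall Y in F, forall e in symdiff X Y,
     exists f in symdiff X Y, symdiff X [set e; f] \in F].

Definition d (n : nat) : nat :=
  #|[set F : {set {set 'I_n}} | is_delta_matroid F]|.

(* Main.v *)
Require Import Defs.
From mathcomp Require Import all_boot.
From mathcomp Require Import zify.
Set Implicit Arguments. Unset Strict Implicit. Unset Printing Implicit Defensive.

Definition hh n (j : 'I_n) : 'I_n.+1 := lift ord_max j.

Lemma hh_inj n : injective (@hh n).
Proof. exact: lift_inj. Qed.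

Lemma hh_neq n (j : 'I_n) : (hh j == ord_max) = false.
Proof. by rewrite eq_sym (negbTE (neq_lift _ _)). Qed.

Definition emb n (b : bool) (X : {set 'I_n}) : {set 'I_n.+1} :=
  if b then ord_max |: (@hh n @: X) else @hh n @: X.

Lemma emb_h n b (X : {set 'I_n}) j : (hh j \in emb b X) = (j \in X).
Proof. by case: b; rewrite /emb ?in_setU1 mem_imset ?hh_neq //; exact: hh_inj. Qed.

Lemma emb_max n b (X : {set 'I_n}) : (ord_max \in emb b X) = b.
Proof.
case: b; rewrite /emb ?setU11 //.
by apply/imsetP => -[j _ /eqP]; rewrite eq_sym hh_neq.
Qed.

Lemma in_symdiff (T : finType) (A B : {set T}) x :
  (x \in symdiff A B) = ((x \in A) != (x \in B)).
Proof. by rewrite /symdiff !inE; do 2 case: (_ \in _). Qed.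

Lemma symdiff_emb n b (X Y : {set 'I_n}) :
  symdiff (emb b X) (emb b Y) = @hh n @: symdiff X Y.
Proof.
apply/setP => i; case: (unliftP ord_max i) => [j ->|->]; rewrite in_symdiff.
  by rewrite -/(hh j) !emb_h mem_imset ?in_symdiff //; exact: hh_inj.
rewrite !emb_max eqxx; symmetry; exact: (emb_max false).
Qed.

Lemma symdiff_emb2 n b (X : {set 'I_n}) e f :
  symdiff (emb b X) [set hh e; hh f] = emb b (symdiff X [set e; f]).
Proof.
apply/setP => i; case: (unliftP ord_max i) => [j ->|->]; rewrite in_symdiff.
  by rewrite -/(hh j) !emb_h in_symdiff !inE !(inj_eq (@hh_inj n)).
by rewrite !emb_max !inE !(eq_sym ord_max) !hh_neq; case: b.
Qed.

Lemma emb_surj n (Y : {set 'I_n.+1}) :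
  Y = emb (ord_max \in Y) [set j | hh j \in Y].
Proof.
apply/setP => i; case: (unliftP ord_max i) => [j ->|->].
  by rewrite -/(hh j) emb_h inE.
by rewrite emb_max.
Qed.

Definition part n (b : bool) (F : {set {set 'I_n.+1}}) : {set {set 'I_n}} :=
  [set X | emb b X \in F].

Lemma part_dm n b (F : {set {set 'I_n.+1}}) :
  is_delta_matroid F -> part b F != set0 -> is_delta_matroid (part b F).
Proof.
move=> /andP[_ /forall_inP HF] Hne; apply/andP; split=> //.
apply/forall_inP => X; rewrite inE => HX.
apply/forall_inP => Y; rewrite inE => HY.
apply/forall_inP => e He.
have /forall_inP /(_ _ HY) /forall_inP /(_ (hh e)) := HF _ HX.
rewrite symdiff_emb mem_imset; last exact: hh_inj.
move=> /(_ He) /exists_inP [f' Hf'].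
move: Hf'; move=> /imsetP [f Hf ->] HZ.
by apply/exists_inP; exists f => //; rewrite inE -symdiff_emb2.
Qed.

Lemma single_dm (T : finType) (X0 : {set T}) : is_delta_matroid [set X0].
Proof.
apply/andP; split.
  by apply/set0Pn; exists X0; rewrite inE.
apply/forall_inP => X /set1P ->; apply/forall_inP => Y /set1P ->.
by apply/forall_inP => e; rewrite in_symdiff eqxx.
Qed.

Theorem mainTheorem8 (n : nat) (hn : 2 <= n) :
  d n.+1 + 1 < (d n + 1) ^ 2.
Proof.
case: n hn => [|[|m]] // _.
set A := [set G : {set {set 'I_m.+2}} | (G == set0) || is_delta_matroid G].
set B : {set {set {set 'I_m.+2}} * {set {set 'I_m.+2}}} :=
  [set (set0, set0); ([set set0], [set setT])].
set P := setX A A :\: B.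
set D := [set F : {set {set 'I_m.+3}} | is_delta_matroid F].
pose phi (F : {set {set 'I_m.+3}}) := (part false F, part true F).
have phi_inj : injective phi.
  move=> F G [E0 E1]; apply/setP => Y; rewrite (emb_surj Y).
  case: (ord_max \in Y).
    have : ([set j | hh j \in Y] \in part true F) = ([set j | hh j \in Y] \in part true G)
      by rewrite E1.
    by rewrite !inE.
  have : ([set j | hh j \in Y] \in part false F) = ([set j | hh j \in Y] \in part false G)
    by rewrite E0.
  by rewrite !inE.
have sub : phi @: D \subset P.
  apply/subsetP => _ /imsetP [F HF ->]; rewrite inE in HF.
  rewrite in_setD in_set2 in_setX !inE /= !xpair_eqE.
  have HA b : (part b F == set0) || is_delta_matroid (part b F).
    by case: eqP => [_|/eqP H] //=; apply: part_dm.
  rewrite !HA !andbT negb_or; apply/andP; split.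
    apply/negP => /andP [/eqP E0 /eqP E1].
    move: (HF) => /andP [/set0Pn [Y HY] _].
    have : [set j | hh j \in Y] \in part (ord_max \in Y) F by rewrite inE -emb_surj.
    by case: (ord_max \in Y); rewrite ?E0 ?E1 inE.
  apply/negP => /andP [/eqP E0 /eqP E1].
  have H0 : emb false set0 \in F.
    have : set0 \in part false F by rewrite E0 inE.
    by rewrite inE.
  have H1 : emb true setT \in F.
    have : setT \in part true F by rewrite E1 inE.
    by rewrite inE.
  move: HF => /andP [_ /forall_inP HF].
  have := HF _ H0 => /forall_inP /(_ _ H1) /forall_inP /(_ ord_max).
  rewrite in_symdiff !emb_max /= => /(_ isT) /exists_inP [f _ HZ].
  set Z := symdiff _ _ in HZ.
  have HZm : ord_max \in Z.
  by rewrite /Z in_symdiff imset0 !inE eqxx.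
  have E := emb_surj Z; rewrite HZm in E.
  have : [set j | hh j \in Z] \in part true F by rewrite inE -E.
  rewrite E1 inE => /eqP ET.
  have hZ (j : 'I_m.+2) : hh j = f.
    have := in_setT j; rewrite -ET inE /Z in_symdiff imset0 in_set0 !inE hh_neq /=.
    by case: (hh j =P f).
  have := hh_inj (etrans (hZ ord0) (esym (hZ (@Ordinal m.+2 1 isT)))).
  by move/(congr1 val).
have cardD : #|D| <= #|P|.
  by rewrite -(card_imset _ phi_inj); exact: subset_leq_card.
have cardA : #|A| = (d m.+2).+1.
  have -> : A = set0 |: [set G | is_delta_matroid G] by apply/setP=> G; rewrite !inE.
  have H0 : is_delta_matroid (set0 : {set {set 'I_m.+2}}) = false by rewrite /is_delta_matroid eqxx.
  by rewrite cardsU1 inE H0 add1n.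
have subB : B \subset setX A A.
  apply/subsetP => x; rewrite in_set2 => /orP [] /eqP ->; rewrite in_setX !inE ?eqxx //.
  by rewrite !single_dm !orbT.
have cardB : #|B| = 2.
  rewrite cards2 xpair_eqE; case: eqP => // E.
  have : (set0 : {set 'I_m.+2}) \in [set set0] by rewrite inE.
  by rewrite -E inE.
have cardP : #|P| = #|A| * #|A| - 2.
  by rewrite cardsD (setIidPr subB) cardsX cardB.
have : d m.+3 <= #|P| := cardD.
have dpos : 0 < d m.+2.
  by apply/card_gt0P; exists [set set0]; rewrite inE single_dm.
rewrite cardP cardA; rewrite expnS expn1; nia.
Qed.
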